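(* For any real numbers $t\ge1$ and $\varepsilon>0$, there exist an instance, a $t$-cohesive group $N^*$, and an allocation $A$ satisfying EJR-1 such that the average satisfaction of $N^*$ with respect to $A$ is at most $\frac{t-2+1/t}{2}+\varepsilon$.
   Context: Model: There is a set of agents $N=\{1,\dots,n\}$. The resource $R$ consists of a cake $C=[0,c]$ for a real $c\ge 0$ and a set of indivisible goods $G=\{g_1,\dots,g_m\}$ for an integer $m\ge 0$, with $\max(c,m)>0$. A piece of cake is a union of finitely many disjoint closed subintervals of $C$; its length $\ell(\cdot)$ is the sum of the lengths of its intervals. A bundle $R'=(C',G')$ consists of a piece of cake $C'\subseteq C$ and a set $G'\subseteq G$; its size is $s(R')=\ell(C')+|G'|$. Each agent $i$ approves a bundle $R_i=(C_i,G_i)$, and her utility for a bundle $R'$ is $u_i(R')=\ell(C_i\cap C')+|G_i\cap G'|$. A parameter $\alpha\in(0,c+m]$ is given; an allocation is a bundle $A$ with $s(A)\le\alpha$. For a real $t>0$, $N^*\subseteq N$ is $t$-cohesive if $|N^*|\ge t n/\alpha$ and $s(\bigcap_{i\in N^*}R_i)\ge t$. EJR-1: an allocation $A$ satisfies EJR-1 if for every real $t>0$ and every $t$-cohesive group $N^*$, some $j\in N^*$ has $u_j(A)>t-1$. The average satisfaction of a group $N'\subseteq N$ with respect to $A$ is $\frac1{|N'|}\sum_{i\in N'}u_i(A)$. *)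

(* Defs.v *)
From Stdlib Require Import Reals Lra Lia List.
Import ListNotations.
Open Scope R_scope.

(* A piece of cake: a finite list of closed intervals [a,b] (pairs (a,b)). *)
Definition piece := list (R * R).

Definition valid_piece (c : R) (P : piece) : Prop :=
  Forall (fun ab => 0 <= fst ab /\ fst ab <= snd ab /\ snd ab <= c) P /\
  ForallOrdPairs (fun ab cd => snd ab < fst cd \/ snd cd < fst ab) P.

Definition piece_len (P : piece) : R :=
  fold_right (fun ab s => (snd ab - fst ab) + s) 0 P.

Definition piece_inter (P Q : piece) : piece :=
  flat_map (fun ab =>
    flat_map (fun cd =>
      let lo := Rmax (fst ab) (fst cd) in
      let hi := Rmin (snd ab) (snd cd) in
      if Rle_dec lo hi then [(lo, hi)] else []) Q) P.

(* Goods are g_0, ..., g_{m-1}, represented by nat indices < m. *)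
Definition goods_inter (G H : list nat) : list nat :=
  filter (fun g => existsb (Nat.eqb g) H) G.

Record bundle := mkBundle { b_cake : piece; b_goods : list nat }.

Definition valid_bundle (c : R) (m : nat) (B : bundle) : Prop :=
  valid_piece c (b_cake B) /\ NoDup (b_goods B) /\
  (forall g, In g (b_goods B) -> (g < m)%nat).

Definition bundle_size (B : bundle) : R :=
  piece_len (b_cake B) + INR (length (b_goods B)).

Definition bundle_inter (B B' : bundle) : bundle :=
  mkBundle (piece_inter (b_cake B) (b_cake B'))
           (goods_inter (b_goods B) (b_goods B')).

(* An instance: n agents (indexed 0..n-1), cake [0,c], m goods,
   parameter alpha, and the approved bundle of each agent. *)
Record instance := mkInstance {
  n_agents : nat;
  cake_c : R;
  m_goods : nat;
  alpha : R;
  approved : nat -> bundle }.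

Definition valid_instance (I : instance) : Prop :=
  (1 <= n_agents I)%nat /\
  0 <= cake_c I /\
  0 < Rmax (cake_c I) (INR (m_goods I)) /\
  0 < alpha I /\ alpha I <= cake_c I + INR (m_goods I) /\
  (forall i, (i < n_agents I)%nat ->
     valid_bundle (cake_c I) (m_goods I) (approved I i)).

Definition full_bundle (I : instance) : bundle :=
  mkBundle [(0, cake_c I)] (seq 0 (m_goods I)).

Definition utility (I : instance) (i : nat) (A : bundle) : R :=
  bundle_size (bundle_inter (approved I i) A).

Definition allocation (I : instance) (A : bundle) : Prop :=
  valid_bundle (cake_c I) (m_goods I) A /\ bundle_size A <= alpha I.

Definition group (I : instance) (Ns : list nat) : Prop :=
  NoDup Ns /\ (forall i, In i Ns -> (i < n_agents I)%nat).

Definition group_inter (I : instance) (Ns : list nat) : bundle :=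
  fold_right (fun i B => bundle_inter (approved I i) B) (full_bundle I) Ns.

Definition cohesive (I : instance) (t : R) (Ns : list nat) : Prop :=
  group I Ns /\
  INR (length Ns) >= t * INR (n_agents I) / alpha I /\
  bundle_size (group_inter I Ns) >= t.

Definition EJR1 (I : instance) (A : bundle) : Prop :=
  forall (t : R) (Ns : list nat), 0 < t -> cohesive I t Ns ->
    exists j, In j Ns /\ utility I j A > t - 1.

Definition avg_satisfaction (I : instance) (Ns : list nat) (A : bundle) : R :=
  fold_right (fun i s => utility I i A + s) 0 Ns / INR (length Ns).

(* Main.v *)
Require Import Defs.
From Stdlib Require Import Reals List.
From Stdlib Require Import Lra Lia ZArith Classical.
Import ListNotations.
Open Scope R_scope.

Lemma nat_of_up (r : R) : 0 < r -> exists k : nat, r < INR k /\ INR k <= r + 1.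
Proof.
  intros hr. destruct (archimed r) as [h1 h2].
  exists (Z.to_nat (up r)).
  assert (0 <= up r)%Z. { apply le_IZR. lra. }
  rewrite INR_IZR_INZ, Z2Nat.id by lia. lra.
Qed.

Lemma goods_inter_nil (G : list nat) : goods_inter G [] = [].
Proof. induction G; simpl; auto. Qed.

Lemma goods_inter_incl (G H : list nat) :
  (forall g, In g G -> In g H) -> goods_inter G H = G.
Proof.
  induction G as [|a G IH]; intros hi; simpl; auto.
  assert (existsb (Nat.eqb a) H = true) as ->.
  { apply existsb_exists. exists a. split. apply hi; simpl; auto. apply Nat.eqb_refl. }
  f_equal. apply IH. intros g hg. apply hi; simpl; auto.
Qed.

Lemma piece_inter_wf (P Q : piece) : Forall (fun ab => fst ab <= snd ab) (piece_inter P Q).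
Proof.
  apply Forall_forall. intros x hx. unfold piece_inter in hx.
  apply in_flat_map in hx as [ab [_ hx]].
  apply in_flat_map in hx as [cd [_ hx]].
  destruct (Rle_dec _ _) as [h|h]; simpl in hx; [|contradiction].
  destruct hx as [<-|[]]. simpl. exact h.
Qed.

Lemma piece_len_nonneg (P : piece) : Forall (fun ab => fst ab <= snd ab) P -> 0 <= piece_len P.
Proof.
  induction P as [|a P IH]; intros h; simpl. lra.
  inversion h; subst. specialize (IH H2). lra.
Qed.

Lemma fold_shift (g : nat -> R) (z : R) (l : list nat) :
  fold_right (fun i acc => g i + acc) z l = fold_right (fun i acc => g i + acc) 0 l + z.
Proof. induction l; simpl; [lra|]. rewrite IHl. lra. Qed.

Lemma sum_tri (p n : nat) :
  2 * fold_right (fun i acc => INR (i + 1 - p) + acc) 0 (seq 0 n)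
  = INR (n - p) * INR (n - p + 1).
Proof.
  induction n as [|n IH].
  - simpl. lra.
  - rewrite seq_S, fold_right_app. rewrite fold_shift. cbn [fold_right]. rewrite Nat.add_0_l.
    destruct (le_lt_dec p n) as [h|h].
    + replace (S n - p)%nat with (S (n - p)) by lia.
      replace (n + 1 - p)%nat with (S (n - p)) in * by lia.
      replace (S (n - p) + 1)%nat with (S (S (n - p))) by lia.
      replace (n - p + 1)%nat with (S (n - p)) in IH by lia.
      rewrite !S_INR in *. nra.
    + replace (S n - p)%nat with 0%nat by lia.
      replace (n + 1 - p)%nat with 0%nat by lia.
      replace (n - p)%nat with 0%nat in IH by lia. cbn [fold_right] in *. simpl in *. lra.
Qed.

Lemma fold_scale (g : nat -> R) (q d : R) (l : list nat) : q <> 0 ->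
  fold_right (fun i acc => (g i / q + d) + acc) 0 l
  = fold_right (fun i acc => g i + acc) 0 l / q + INR (length l) * d.
Proof.
  intros hq. induction l; cbn [fold_right length]. simpl. field. auto.
  rewrite IHl, S_INR. field. auto.
Qed.

Definition bk (p : nat) (d : R) (k : nat) : R := INR (k + 1 - p) / INR p + d.

Lemma util_calc (b a : R) (G : list nat) : 0 <= b -> b <= a ->
  bundle_size (bundle_inter (mkBundle [(0, b)] G) (mkBundle [(0, a)] [])) = b.
Proof.
  intros h0 h1. unfold bundle_size, bundle_inter. cbn [b_cake b_goods].
  rewrite goods_inter_nil. unfold piece_inter. simpl.
  rewrite (Rmax_left 0 0) by lra. rewrite Rmin_left by lra.
  destruct (Rle_dec 0 b); [|lra]. simpl. lra.
Qed.

Lemma bound_ineq (s p t : R) : 1 <= t -> 1 <= p -> t * p < s -> s <= t * p + 1 ->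
  (s - p) * (s - p + 1) / (2 * p * s) <= (t - 2 + 1 / t) / 2 + 1 / p.
Proof.
  intros ht hp h1 h2.
  assert (hs : 0 < s) by nra.
  assert (key : t * ((s - p) * (s - p + 1)) <= p * s * t * (t - 2) + p * s + 2 * s * t).
  { assert (h3 : (1 - (s - p * t)) * (s * t - p) >= 0).
    { apply Rle_ge. apply Rmult_le_pos; nra. }
    nra. }
  assert (hps : 0 < p * s) by (apply Rmult_lt_0_compat; lra).
  assert (hpst : 0 < p * s * t) by (apply Rmult_lt_0_compat; lra).
  apply Rmult_le_reg_r with (2 * p * s * t). lra.
  replace ((s - p) * (s - p + 1) / (2 * p * s) * (2 * p * s * t)) with (t * ((s - p) * (s - p + 1))) by (field; lra).
  replace (((t - 2 + 1 / t) / 2 + 1 / p) * (2 * p * s * t)) with (p * s * t * (t - 2) + p * s + 2 * s * t) by (field; lra).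
  exact key.
Qed.

Lemma fold_ext_in (f g : nat -> R) (l : list nat) :
  (forall i, In i l -> f i = g i) ->
  fold_right (fun i acc => f i + acc) 0 l = fold_right (fun i acc => g i + acc) 0 l.
Proof.
  induction l; intros h; simpl; auto.
  rewrite h by (simpl; auto). rewrite IHl; auto. intros i hi; apply h; simpl; auto.
Qed.

Lemma INR_sub_ge (a b : nat) : INR a - INR b <= INR (a - b).
Proof.
  destruct (le_lt_dec b a) as [h|h].
  - rewrite minus_INR by exact h. lra.
  - replace (a - b)%nat with 0%nat by lia. apply lt_INR in h. simpl. lra.
Qed.

Lemma bk_mono (p : nat) (d : R) (k k' : nat) : (0 < INR p) -> (k <= k')%nat -> bk p d k <= bk p d k'.
Proof.
  intros hp hk. unfold bk. apply Rplus_le_compat_r. unfold Rdiv.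
  apply Rmult_le_compat_r. left; apply Rinv_0_lt_compat; auto.
  apply le_INR. lia.
Qed.

Lemma bk_nonneg (p : nat) (d : R) (k : nat) : (0 < INR p) -> 0 <= d -> 0 <= bk p d k.
Proof.
  intros hp hd. unfold bk. assert (0 <= INR (k + 1 - p) / INR p).
  { unfold Rdiv. apply Rmult_le_pos. apply pos_INR. left; apply Rinv_0_lt_compat; auto. }
  lra.
Qed.

Theorem mainTheorem17 (t eps : R) (ht : 1 <= t) (heps : 0 < eps) :
  exists (I : instance) (Ns : list nat) (A : bundle),
    valid_instance I /\ cohesive I t Ns /\ allocation I A /\ EJR1 I A /\
    avg_satisfaction I Ns A <= (t - 2 + 1 / t) / 2 + eps.
Proof.
  assert (h2e : 0 < 2 / eps) by (apply Rdiv_lt_0_compat; lra).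
  destruct (nat_of_up (2 / eps) h2e) as [p [hp1 _]].
  assert (hp : 1 <= INR p).
  { destruct p. simpl in hp1. lra. rewrite S_INR. pose proof (pos_INR p). lra. }
  assert (hpe : 1 / INR p <= eps / 2).
  { apply Rmult_le_reg_r with (INR p * 2 / eps). apply Rdiv_lt_0_compat; lra.
    replace (1 / INR p * (INR p * 2 / eps)) with (2 / eps) by (field; lra).
    replace (eps / 2 * (INR p * 2 / eps)) with (INR p) by (field; lra). lra. }
  destruct (nat_of_up (t * INR p)) as [s [hs1 hs2]]. nra.
  destruct (nat_of_up t) as [M [hM1 _]]. lra.
  set (d := eps / (eps + 2)).
  assert (hd0 : 0 < d) by (unfold d; apply Rdiv_lt_0_compat; lra).
  assert (hd1 : d <= 1).
  { unfold d. apply Rmult_le_reg_r with (eps + 2). lra.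
    replace (eps / (eps + 2) * (eps + 2)) with eps by (field; lra). lra. }
  assert (hd2 : d <= eps / 2).
  { unfold d. apply Rmult_le_reg_r with (eps + 2). lra.
    replace (eps / (eps + 2) * (eps + 2)) with eps by (field; lra). nra. }
  assert (hps : (p <= s)%nat).
  { apply INR_le. nra. }
  assert (hs : (1 <= s)%nat).
  { apply INR_le. simpl. nra. }
  assert (hsR : 0 < INR s) by (apply le_INR in hs; simpl in hs; lra).
  assert (hp0 : 0 < INR p) by lra.
  set (c := INR s / INR p).
  assert (hc : 0 < c) by (unfold c; apply Rdiv_lt_0_compat; lra).
  set (a := bk p d (s - 1)).
  assert (ha : a = (INR s - INR p) / INR p + d).
  { unfold a, bk. replace (s - 1 + 1 - p)%nat with (s - p)%nat by lia.
    rewrite minus_INR by exact hps. reflexivity. }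
  assert (hac : a <= c).
  { rewrite ha. unfold c. replace ((INR s - INR p) / INR p) with (INR s / INR p - 1) by (field; lra). lra. }
  assert (hbk : forall k, (k < s)%nat -> 0 <= bk p d k <= a).
  { intros k hk. split. apply bk_nonneg; lra. apply bk_mono; [lra|lia]. }
  set (I := mkInstance s c M c (fun k => mkBundle [(0, bk p d k)] (seq 0 M))).
  set (A := mkBundle [(0, a)] []).
  assert (hut : forall k, (k < s)%nat -> utility I k A = bk p d k).
  { intros k hk. unfold utility. simpl. apply util_calc; apply hbk; auto. }
  assert (hdiv : forall x, x * INR s / c = x * INR p).
  { intros x. unfold c. field. lra. }
  assert (hMpos : 0 <= INR M) by apply pos_INR.
  exists I, (seq 0 s), A.
  split; [|split; [|split; [|split]]].
  -
    unfold valid_instance. simpl.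
    split; [lia|]. split; [lra|]. split.
    { apply Rlt_le_trans with c; auto. apply Rmax_l. }
    split; [lra|]. split; [lra|].
    intros i hi. unfold valid_bundle. simpl. split; [|split].
    + unfold valid_piece. simpl. split.
      * constructor; [|constructor]. simpl. pose proof (hbk i hi). lra.
      * constructor; constructor.
    + apply seq_NoDup.
    + intros g hg. apply in_seq in hg. lia.
  -
    unfold cohesive. split; [|split].
    + split. apply seq_NoDup. intros i hi. apply in_seq in hi. simpl. lia.
    + rewrite length_seq. simpl. rewrite hdiv. lra.
    + assert (hg : forall l, b_goods (group_inter I l) = seq 0 M).
      { induction l as [|x l IH]; simpl; auto. rewrite IH. apply goods_inter_incl; auto. }
      unfold bundle_size. rewrite hg, length_seq.
      assert (hcake : exists P Q, b_cake (group_inter I (seq 0 s)) = piece_inter P Q).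
      { destruct s as [|s']. lia. exists [(0, bk p d 0)], (b_cake (group_inter I (seq 1 s'))). reflexivity. }
      destruct hcake as [P [Q ->]]. pose proof (piece_len_nonneg _ (piece_inter_wf P Q)). lra.
  -
    unfold allocation. split.
    + unfold valid_bundle. simpl. split; [|split].
      * unfold valid_piece. simpl. split.
        -- constructor; [|constructor]. simpl. pose proof (hbk (s-1)%nat ltac:(lia)). fold a in H. lra.
        -- constructor; constructor.
      * constructor.
      * intros g [].
    + unfold bundle_size. simpl. lra.
  -
    intros t' Ns' ht' [[hnd hlt] [hlen _]].
    simpl in hlt. rewrite hdiv in hlen.
    assert (hl1 : (1 <= length Ns')%nat).
    { assert (0 < t' * INR p) by (apply Rmult_lt_0_compat; lra). destruct (length Ns'); [simpl in hlen; lra | lia]. }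
    destruct (classic (exists j, In j Ns' /\ (length Ns' <= S j)%nat)) as [[j [hj hjl]]|hno].
    + exists j. split; auto. rewrite hut by (apply hlt; auto).
      unfold bk. pose proof (INR_sub_ge (j + 1) p).
      apply le_INR in hjl. rewrite S_INR in hjl. rewrite plus_INR in H. simpl in H.
      assert ((INR j + 1 - INR p) / INR p <= INR (j + 1 - p) / INR p).
      { unfold Rdiv. apply Rmult_le_compat_r. left; apply Rinv_0_lt_compat; auto. lra. }
      assert (t' - 1 <= (INR j + 1 - INR p) / INR p).
      { replace ((INR j + 1 - INR p) / INR p) with ((INR j + 1) / INR p - 1) by (field; lra).
        assert (t' <= (INR j + 1) / INR p).
        { apply Rmult_le_reg_r with (INR p); auto.
          replace ((INR j + 1) / INR p * INR p) with (INR j + 1) by (field; lra). lra. }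
        lra. }
      lra.
    + exfalso.
      assert (hinc : incl Ns' (seq 0 (length Ns' - 1))).
      { intros x hx. apply in_seq. split. lia.
        destruct (le_lt_dec (length Ns') (S x)) as [h|h].
        - exfalso. apply hno. eauto.
        - lia. }
      pose proof (NoDup_incl_length hnd hinc). rewrite length_seq in H. lia.
  -
    unfold avg_satisfaction. rewrite length_seq.
    rewrite (fold_ext_in _ (fun k => INR (k + 1 - p) / INR p + d)).
    2:{ intros i hi. apply in_seq in hi. rewrite hut by lia. reflexivity. }
    rewrite fold_scale by lra. rewrite length_seq.
    pose proof (sum_tri p s) as hsum.
    rewrite plus_INR, minus_INR in hsum by exact hps. simpl in hsum.
    set (S := fold_right _ 0 (seq 0 s)) in *.
    assert (hS : S = (INR s - INR p) * (INR s - INR p + 1) / 2) by lra.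
    rewrite hS.
    replace (((INR s - INR p) * (INR s - INR p + 1) / 2 / INR p + INR s * d) / INR s)
      with ((INR s - INR p) * (INR s - INR p + 1) / (2 * INR p * INR s) + d) by (field; lra).
    pose proof (bound_ineq (INR s) (INR p) t ht hp hs1 hs2). lra.
Qed.
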